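(* Let $N\ge0$ be an integer and $a,b,c,z$ complex numbers (or indeterminates) with $z\ne0$ such that all arguments and denominators below are well defined and nonzero. Then \begin{align*} {}_{2}F_{1}^{[N]}\left(\begin{matrix}a,b\\ c\end{matrix};z\right) &=\frac{(b+Nz^{-1}-N)_{N}}{(Nz^{-1}-N)_{N}}\, {}_{2}F_{1}^{[N]}\left(\begin{matrix}c-a,b\\ c\end{matrix};\frac{N}{N-Nz^{-1}+1-b}\right) \\ &=\frac{(a+b-c+Nz^{-1}-N)_{N}}{(Nz^{-1}-N)_{N}}\, {}_{2}F_{1}^{[N]}\left(\begin{matrix}c-a,c-b\\ c\end{matrix};\frac{N}{Nz^{-1}+a+b-c}\right). \end{align*}
   Context: $(x)_m=x(x+1)\cdots(x+m-1)$ is the rising factorial, $(x)_0=1$. For $N\ge0$, \[ {}_{2}F_{1}^{[N]}\left(\begin{matrix}a,b\\ c\end{matrix};z\right)=\sum_{m=0}^{N}\frac{(a)_m(b)_m}{(c)_m\, m!}\,\frac{(N+1-m)_m}{(Nz^{-1}-m)_m}. \] *)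

(* Defs.v *)
From mathcomp Require Import all_boot all_order all_algebra.
Set Implicit Arguments. Unset Strict Implicit. Unset Printing Implicit Defensive.
Import Order.TTheory GRing.Theory Num.Theory.
Local Open Scope ring_scope.

Definition rfact {C : numClosedFieldType} (x : C) (m : nat) : C :=
  \prod_(i < m) (x + i%:R).

Definition F21N {C : numClosedFieldType} (N : nat) (a b c z : C) : C :=
  \sum_(m < N.+1)
    (rfact a m * rfact b m / (rfact c m * (m`!)%:R))
    * (rfact (N%:R + 1 - m%:R) m / rfact (N%:R / z - m%:R) m).

(* Main.v *)
Require Import Defs.
From mathcomp Require Import all_boot all_order all_algebra.
From mathcomp Require Import ring.
Import Order.TTheory GRing.Theory Num.Theory.
Local Open Scope ring_scope.

Section S.
Variable C : numClosedFieldType.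
Implicit Types (x u a b c y : C).

Lemma rfactS x m : rfact x m.+1 = x * rfact (x + 1) m.
Proof.
rewrite /rfact big_ord_recl /= addr0; congr (_ * _).
by apply: eq_bigr => i _; rewrite /bump leq0n add1n -natr1; ring.
Qed.

Lemma rfactSr x m : rfact x m.+1 = rfact x m * (x + m%:R).
Proof. by rewrite /rfact big_ord_recr. Qed.

Lemma rfact0 x : rfact x 0 = 1.
Proof. by rewrite /rfact big_ord0. Qed.

Lemma rfactD x m n : rfact x (m + n) = rfact x m * rfact (x + m%:R) n.
Proof.
elim: n => [|n IH]; first by rewrite addn0 rfact0 mulr1.
by rewrite addnS !rfactSr IH natrD mulrA addrA.
Qed.

Lemma rfact_refl u m : rfact (1 - u - m%:R) m = (-1) ^+ m * rfact u m.
Proof.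
elim: m u => [|m IH] u; first by rewrite !rfact0 expr0 mulr1.
rewrite rfactS.
have -> : 1 - u - m.+1%:R + 1 = 1 - u - m%:R by rewrite -natr1; ring.
by rewrite IH rfactSr exprS -natr1; ring.
Qed.

Lemma rfact_fact k m : rfact (k.+1%:R : C) m * (k`!)%:R = ((k + m)`!)%:R.
Proof.
elim: m => [|m IH]; first by rewrite rfact0 mul1r addn0.
rewrite rfactSr mulrAC IH addnS factS natrM mulrC; congr (_ * _).
by rewrite -natrD addSn.
Qed.

Lemma rfact_bin N m : (m <= N)%N ->
  rfact (N%:R + 1 - m%:R : C) m = ('C(N, m) * m`!)%:R.
Proof.
move=> le.
have -> : N%:R + 1 - m%:R = ((N - m).+1)%:R :> C by rewrite -natr1 natrB //; ring.
have h := rfact_fact (N - m) m.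
rewrite subnK // -(bin_fact le) mulnA natrM in h.
apply: (mulIf _ h); by rewrite pnatr_eq0 -lt0n fact_gt0.
Qed.

Lemma binC N k j : (k + j <= N)%N ->
  ('C(k + j, k) * 'C(N, k + j) = 'C(N, k) * 'C(N - k, j))%N.
Proof.
move=> le.
have hp : (0 < k`! * j`! * (N - (k + j))`!)%N by rewrite !muln_gt0 !fact_gt0.
apply/eqP; rewrite -(eqn_pmul2r hp); apply/eqP.
have e1 := bin_fact (leq_addr j k). rewrite addKn in e1.
have e2 := bin_fact le.
have e3 : (k <= N)%N by apply: leq_trans le; apply: leq_addr.
have e4 := bin_fact e3.
have e5 : (j <= N - k)%N by rewrite leq_subRL.
have e6 := bin_fact e5.
rewrite subnDA in e2 *.
transitivity ('C(N, k + j) * ('C(k + j, k) * (k`! * j`!)) * (N - k - j)`!)%N; first by ring.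
rewrite e1.
transitivity ('C(N, k + j) * ((k + j)`! * (N - k - j)`!))%N; first by ring.
rewrite e2 -e4.
transitivity ('C(N, k) * k`! * ('C(N - k, j) * (j`! * (N - k - j)`!)))%N; last by ring.
by rewrite e6; ring.
Qed.

Lemma CV n a c : rfact (c - a) n =
  \sum_(k < n.+1) (-1) ^+ k * ('C(n, k))%:R * rfact a k * rfact (c + k%:R) (n - k).
Proof.
elim: n c => [|n IH] c.
  by rewrite big_ord1 !rfact0 expr0 bin0 mul1r mulr1 mulr1.
set X := fun k : nat => rfact a k * rfact (c + k%:R) (n.+1 - k).
have split1 : \sum_(k < n.+2) (-1) ^+ k * ('C(n.+1, k))%:R * rfact a k * rfact (c + k%:R) (n.+1 - k)
  = \sum_(k < n.+1) (-1) ^+ k * ('C(n, k))%:R * X k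
    + \sum_(k < n.+1) (-1) ^+ k.+1 * ('C(n, k))%:R * X k.+1.
  have e : \sum_(k < n.+1) (-1) ^+ k * ('C(n, k))%:R * X k
        = \sum_(k < n.+2) (-1) ^+ k * ('C(n, k))%:R * X k.
    by rewrite [in RHS]big_ord_recr /= bin_small // mulr0 mul0r addr0.
  rewrite e big_ord_recl [X in _ = X + _]big_ord_recl -addrA; congr (_ + _).
    rewrite /X /= !bin0; ring.
  rewrite -big_split /=.
  apply: eq_bigr => i _; rewrite /bump leq0n add1n binS natrD /X; ring.
rewrite split1 rfactS.
have -> : c - a + 1 = (c + 1) - a by ring.
rewrite IH mulr_sumr -big_split; apply: eq_bigr => [[k hk]] _ /=.
rewrite /X subSS subSn // rfactS rfactSr -natr1.
have -> : c + k%:R + 1 = c + 1 + k%:R by ring.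
have -> : c + (k%:R + 1) = c + 1 + k%:R by ring.
rewrite exprS; ring.
Qed.

Lemma CVdiv N m a c : (m <= N)%N -> rfact c m != 0 ->
  rfact (c - a) m / rfact c m =
  \sum_(k < N.+1) (-1) ^+ k * ('C(m, k))%:R * rfact a k / rfact c k.
Proof.
move=> le nz.
rewrite CV mulr_suml.
transitivity (\sum_(k < m.+1) (-1) ^+ k * ('C(m, k))%:R * rfact a k / rfact c k).
  apply: eq_bigr => [[k hk]] _ /=.
  have hc := rfactD c k (m - k); rewrite subnKC // in hc.
  move: nz; rewrite hc mulf_eq0 negb_or => /andP[n1 n2].
  by field; rewrite n1 n2.
rewrite (big_ord_widen N.+1 (fun k : nat => (-1) ^+ k * ('C(m, k))%:R * rfact a k / rfact c k)) //.
rewrite big_mkcond /=; apply: eq_bigr => k _.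
case: ifP => // /negbT; rewrite -leqNgt => h.
by rewrite bin_small // mulr0 !mul0r.
Qed.


Lemma inner N k b y : (k <= N)%N ->
  \sum_(m < N.+1) (-1) ^+ m * ('C(m, k))%:R * ('C(N, m))%:R * rfact b m
       * rfact (b + y + m%:R) (N - m)
  = (-1) ^+ k * ('C(N, k))%:R * rfact b k * rfact y (N - k).
Proof.
move=> hk.
pose F := fun m : nat => (-1) ^+ m * ('C(m, k))%:R * ('C(N, m))%:R * rfact b m
       * rfact (b + y + m%:R) (N - m).
transitivity (\sum_(m < N.+1) F m) => //.
rewrite -(big_mkord xpredT F) (big_cat_nat (n:=k)) //=; last by apply: leqW.
rewrite [X in X + _]big1_seq ?add0r; last first.
  move=> i; rewrite mem_index_iota => /andP[_ hi].
  by rewrite /F bin_small // mulr0 !mul0r.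
rewrite -{1}(add0n k) big_addn big_mkord subSn //.
have -> : rfact y (N - k) = rfact ((b + k%:R + y) - (b + k%:R)) (N - k) by congr rfact; ring.
rewrite CV mulr_sumr; apply: eq_bigr => [[j hj]] _ /=.
have hkj : (k + j <= N)%N by rewrite -leq_subRL.
rewrite /F addnC -(mulrA ((-1) ^+ (k + j))) -natrM binC // natrM subnDA rfactD exprD natrD.
have -> : b + y + (k%:R + j%:R) = b + k%:R + y + j%:R by ring.
ring.
Qed.

Lemma sign2 k : (-1) ^+ k * (-1) ^+ k = 1 :> C.
Proof. by rewrite -exprD addnn -mul2n exprM expr2 mulrNN mulr1 expr1n. Qed.

Lemma shep N a b c y : (forall m, (m <= N)%N -> rfact c m != 0) ->
  \sum_(m < N.+1) rfact a m * rfact b m / rfact c m * ('C(N, m))%:R * rfact y (N - m)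
  = \sum_(m < N.+1) rfact (c - a) m * rfact b m / rfact c m * ((-1) ^+ m * ('C(N, m))%:R)
       * rfact (b + y + m%:R) (N - m).
Proof.
move=> hc.
rewrite [RHS](eq_bigr (fun m : 'I_N.+1 => \sum_(k < N.+1) ((-1) ^+ k * rfact a k / rfact c k) *
   ((-1) ^+ m * ('C(m, k))%:R * ('C(N, m))%:R * rfact b m * rfact (b + y + m%:R) (N - m)))); last first.
  move=> [m hm] _ /=.
  have -> : rfact (c - a) m * rfact b m / rfact c m * ((-1) ^+ m * 'C(N, m)%:R) * rfact (b + y + m%:R) (N - m)
    = (rfact (c - a) m / rfact c m) * (rfact b m * ((-1) ^+ m * 'C(N, m)%:R) * rfact (b + y + m%:R) (N - m)) by ring.
  rewrite (@CVdiv N m a c (ltnSE hm) (hc m (ltnSE hm))) mulr_suml; apply: eq_bigr => k _; ring.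
rewrite exchange_big /=; apply: eq_bigr => [[k hk]] _ /=.
rewrite -mulr_sumr inner //.
transitivity (((-1) ^+ k * (-1) ^+ k) * (rfact a k * rfact b k / rfact c k * 'C(N, k)%:R * rfact y (N - k))); first by rewrite sign2 mul1r.
ring.
Qed.

Lemma termL N m (A B c w : C) : (m <= N)%N -> rfact c m != 0 -> rfact (w - N%:R) N != 0 ->
  A * B / (rfact c m * (m`!)%:R) * (rfact (N%:R + 1 - m%:R) m / rfact (w - m%:R) m)
  = A * B / rfact c m * ('C(N, m))%:R * rfact (w - N%:R) (N - m) / rfact (w - N%:R) N.
Proof.
move=> le hc hD.
have e := rfactD (w - N%:R) (N - m) m; rewrite subnK // in e.
rewrite (_ : w - N%:R + (N - m)%:R = w - m%:R) in e; last by rewrite natrB //; ring.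
move: hD; rewrite e mulf_eq0 negb_or => /andP[h1 h2].
rewrite rfact_bin // natrM.
have hf : (m`!)%:R != 0 :> C by rewrite pnatr_eq0 -lt0n fact_gt0.
by field; rewrite hc hf h1 h2.
Qed.

Lemma termR1 N m (A B c u v D : C) : (m <= N)%N -> rfact c m != 0 -> D != 0 ->
  v = 1 - u -> rfact (v - m%:R) m != 0 ->
  rfact u N / D * (A * B / (rfact c m * (m`!)%:R) * (rfact (N%:R + 1 - m%:R) m / rfact (v - m%:R) m))
  = A * B / rfact c m * ((-1) ^+ m * ('C(N, m))%:R) * rfact (u + m%:R) (N - m) / D.
Proof.
move=> le hc hD ev hv.
have e := rfactD u m (N - m); rewrite subnKC // in e.
have ev' : v - m%:R = 1 - u - m%:R by rewrite ev.
rewrite ev' rfact_refl in hv *.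
move: hv; rewrite mulf_eq0 negb_or => /andP[hs hu].
rewrite e rfact_bin // natrM.
have hf : (m`!)%:R != 0 :> C by rewrite pnatr_eq0 -lt0n fact_gt0.
rewrite (invfM ((-1) ^+ m)) invr_sign.
move: ((-1) ^+ m : C) hs => s hs.
by field; rewrite ?hc ?hf ?hs ?hu ?hD.
Qed.

Lemma termR2 N m (A B c u v D : C) : (m <= N)%N -> rfact c m != 0 -> D != 0 ->
  v = u + N%:R -> rfact (v - m%:R) m != 0 ->
  rfact u N / D * (A * B / (rfact c m * (m`!)%:R) * (rfact (N%:R + 1 - m%:R) m / rfact (v - m%:R) m))
  = A * B / rfact c m * ('C(N, m))%:R * rfact u (N - m) / D.
Proof.
move=> le hc hD ev hv.
have e := rfactD u (N - m) m; rewrite subnK // in e.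
rewrite (_ : u + (N - m)%:R = v - m%:R) in e; last by rewrite natrB // ev; ring.
rewrite e rfact_bin // natrM.
have hf : (m`!)%:R != 0 :> C by rewrite pnatr_eq0 -lt0n fact_gt0.
by field; rewrite hc hf hv hD.
Qed.
End S.

Theorem corollary4p3 (C : numClosedFieldType) (N : nat) (a b c z : C) :
  z != 0 ->
  (* the arguments of the two right-hand sides are well defined *)
  N%:R - N%:R / z + 1 - b != 0 ->
  N%:R / z + a + b - c != 0 ->
  (* the prefactor denominator is nonzero *)
  rfact (N%:R / z - N%:R) N != 0 ->
  (* all denominators in the three sums are nonzero *)
  (forall m : nat, (m <= N)%N -> rfact c m != 0) ->
  (forall m : nat, (m <= N)%N -> rfact (N%:R / z - m%:R) m != 0) ->
  (forall m : nat, (m <= N)%N ->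
     rfact (N%:R / (N%:R / (N%:R - N%:R / z + 1 - b)) - m%:R) m != 0) ->
  (forall m : nat, (m <= N)%N ->
     rfact (N%:R / (N%:R / (N%:R / z + a + b - c)) - m%:R) m != 0) ->
  F21N N a b c z
    = rfact (b + N%:R / z - N%:R) N / rfact (N%:R / z - N%:R) N
      * F21N N (c - a) b c (N%:R / (N%:R - N%:R / z + 1 - b))
  /\
  F21N N a b c z
    = rfact (a + b - c + N%:R / z - N%:R) N / rfact (N%:R / z - N%:R) N
      * F21N N (c - a) (c - b) c (N%:R / (N%:R / z + a + b - c)).
Proof.
move=> hz _ _ hD hc h6 h7 h8.
have [->|hN0] := eqVneq N 0%N.
  rewrite /F21N !big_ord1 /= !rfact0.
  by split; rewrite !divr1 !mul1r.
have hN : N%:R != 0 :> C by rewrite pnatr_eq0.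
have eNN : forall X : C, N%:R / (N%:R / X) = X.
  by move=> X; rewrite invf_div mulrC divfK.
rewrite !eNN in h7 h8.
set w := N%:R / z in hD h6 h7 h8 *.
pose D := rfact (w - N%:R) N.
pose L := \sum_(m < N.+1) rfact a m * rfact b m / rfact c m * ('C(N, m))%:R * rfact (w - N%:R) (N - m).
pose R := \sum_(m < N.+1) rfact (c - a) m * rfact b m / rfact c m * ((-1) ^+ m * ('C(N, m))%:R)
       * rfact (b + (w - N%:R) + m%:R) (N - m).
pose L' := \sum_(m < N.+1) rfact (c - a) m * rfact (c - b) m / rfact c m * ('C(N, m))%:R
       * rfact (a + b - c + w - N%:R) (N - m).
have F1 : F21N N a b c z = L / D.
  rewrite /F21N /L /D mulr_suml; apply: eq_bigr => [[m hm]] _ /=.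
  have hm' : (m <= N)%N := ltnSE hm.
  by apply: termL => //; apply: hc.
have F2 : rfact (b + w - N%:R) N / D * F21N N (c - a) b c (N%:R / (N%:R - w + 1 - b)) = R / D.
  rewrite /F21N /R /D mulr_sumr mulr_suml; apply: eq_bigr => [[m hm]] _ /=.
  rewrite eNN (_ : b + w - N%:R = b + (w - N%:R)); last by ring.
  have hm' : (m <= N)%N := ltnSE hm.
  apply: termR1 => //; try (by apply: hc); try (by apply: h7); ring.
have F3 : rfact (a + b - c + w - N%:R) N / D * F21N N (c - a) (c - b) c (N%:R / (w + a + b - c)) = L' / D.
  rewrite /F21N /L' /D mulr_sumr mulr_suml; apply: eq_bigr => [[m hm]] _ /=.
  rewrite eNN.
  have hm' : (m <= N)%N := ltnSE hm.
  apply: termR2 => //; try (by apply: hc); try (by apply: h8); ring.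
have LR : L = R by rewrite /L /R shep.
have L'R : L' = R.
  rewrite /L' /R.
  transitivity (\sum_(m < N.+1) rfact (c - b) m * rfact (c - a) m / rfact c m * ('C(N, m))%:R
       * rfact (a + b - c + w - N%:R) (N - m)).
    by apply: eq_bigr => m _; rewrite (mulrC (rfact (c - a) m)).
  rewrite shep //; apply: eq_bigr => m _.
  rewrite (_ : c - (c - b) = b); last by ring.
  rewrite (_ : c - a + (a + b - c + w - N%:R) = b + (w - N%:R)); last by ring.
  by rewrite (mulrC (rfact b m)).
by rewrite F2 F3 F1 L'R LR.
Qed.
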